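(* Let $E$ be a finite-dimensional real vector space of dimension $p$ with dual $E^{*}$, and let $h$ be a generalized affine function on $E$ that is finite at at least one point. Represent $h$ as in the context by linearly independent $\eta_1,\dots,\eta_j\in E^{*}$ and scalars $\delta_1,\dots,\delta_j$, and extend $\eta_1,\dots,\eta_j$ to a basis $\eta_1,\dots,\eta_p$ of $E^{*}$. Suppose $h_n$ is a sequence of (real-valued) affine functions on $E$ converging pointwise to $h$. Then there are sequences of scalars $a_n$ and $b_{i,n}$ such that $$h_n(y)=a_n+\sum_{i=1}^{j}b_{i,n}\big(\langle y,\eta_i\rangle-\delta_i\big)+\sum_{i=j+1}^{p}b_{i,n}\langle y,\eta_i\rangle,\qquad y\in E,$$ and, as $n\to\infty$: (a) $b_{i,n}\to\infty$ for $1\le i\le j$; (b) $b_{i,n}/b_{i-1,n}\to0$ for $2\le i\le j$; (c) $b_{i,n}$ converges for $i>j$; (d) $a_n$ converges.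
   Context: A generalized affine function is a function $E\to\mathbb{R}\cup\{\pm\infty\}$ that is both convex and concave. Representation: linearly independent $\eta_1,\dots,\eta_j\in E^{*}$ ($j\ge0$) and scalars $\delta_i$, with $H_0=E$, $H_i=\{y\in H_{i-1}:\langle y,\eta_i\rangle=\delta_i\}$, $C_i^{+}=\{y\in H_{i-1}:\langle y,\eta_i\rangle>\delta_i\}$, $C_i^{-}=\{y\in H_{i-1}:\langle y,\eta_i\rangle<\delta_i\}$, all nonempty, such that $h=+\infty$ on each $C_i^{+}$, $h=-\infty$ on each $C_i^{-}$, and $h$ is affine or constant (possibly $\pm\infty$) on $H_j$ (every generalized affine function has such a representation). Empty sums are zero. *)

(* Defs.v *)
From HB Require Import structures.
From mathcomp Require Import all_boot all_order all_algebra.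
From mathcomp Require Import all_classical all_reals all_analysis.
Set Implicit Arguments. Unset Strict Implicit. Unset Printing Implicit Defensive.
Import Order.TTheory GRing.Theory Num.Theory numFieldNormedType.Exports.
Local Open Scope ring_scope.
Local Open Scope classical_set_scope.

(* E = R^p realised as row vectors 'rV[R]_p; the dual E^* is identified with
   'rV[R]_p via the standard pairing <y, eta> = sum_k y_k eta_k. *)
Definition pair (R : pzRingType) (p : nat) (y eta : 'rV[R]_p) : R :=
  \sum_(k < p) y 0 k * eta 0 k.

(* Convexity of an extended-real function: its epigraph is convex. *)
Definition econvex (R : realType) (p : nat) (h : 'rV[R]_p -> \bar R) : Prop :=
  forall (y1 y2 : 'rV[R]_p) (m1 m2 t : R), 0 <= t <= 1 ->
    (h y1 <= m1%:E)%E -> (h y2 <= m2%:E)%E ->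
    (h (t *: y1 + (1 - t) *: y2)%R <= (t * m1 + (1 - t) * m2)%R%:E)%E.

(* Concavity: its hypograph is convex. *)
Definition econcave (R : realType) (p : nat) (h : 'rV[R]_p -> \bar R) : Prop :=
  forall (y1 y2 : 'rV[R]_p) (m1 m2 t : R), 0 <= t <= 1 ->
    (m1%:E <= h y1)%E -> (m2%:E <= h y2)%E ->
    ((t * m1 + (1 - t) * m2)%R%:E <= h (t *: y1 + (1 - t) *: y2)%R)%E.

Definition gen_affine (R : realType) (p : nat) (h : 'rV[R]_p -> \bar R) : Prop :=
  econvex h /\ econcave h.

Definition affine_fun (R : realType) (p : nat) (f : 'rV[R]_p -> R) : Prop :=
  exists (c : R) (w : 'rV[R]_p), forall y, f y = c + pair y w.

(* The rows of B are eta_1, ..., eta_p (0-based: row 0 .. row p-1).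
   Hset B delta i = H_i = { y : <y,eta_k> = delta_k for all k < i }. *)
Definition Hset (R : realType) (p : nat) (B : 'M[R]_p) (delta : 'I_p -> R)
    (i : nat) : set 'rV[R]_p :=
  [set y | forall k : 'I_p, (k < i)%N -> pair y (row k B) = delta k].

(* C_i^+ and C_i^- (0-based index i corresponds to the paper's i+1). *)
Definition Cplus (R : realType) (p : nat) (B : 'M[R]_p) (delta : 'I_p -> R)
    (i : 'I_p) : set 'rV[R]_p :=
  [set y | Hset B delta i y /\ delta i < pair y (row i B)].
Definition Cminus (R : realType) (p : nat) (B : 'M[R]_p) (delta : 'I_p -> R)
    (i : 'I_p) : set 'rV[R]_p :=
  [set y | Hset B delta i y /\ pair y (row i B) < delta i].

Definition represents (R : realType) (p : nat) (h : 'rV[R]_p -> \bar R)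
    (B : 'M[R]_p) (delta : 'I_p -> R) (j : nat) : Prop :=
  [/\ (j <= p)%N,
      forall i : 'I_p, (i < j)%N -> Cplus B delta i !=set0 /\ Cminus B delta i !=set0,
      forall i : 'I_p, (i < j)%N -> forall y, Cplus B delta i y -> h y = +oo%E,
      forall i : 'I_p, (i < j)%N -> forall y, Cminus B delta i y -> h y = -oo%E
    & (exists c : \bar R, forall y, Hset B delta j y -> h y = c) \/
      (exists (c : R) (w : 'rV[R]_p), forall y, Hset B delta j y -> h y = (c + pair y w)%R%:E)].

(* Main.v *)
Require Import Defs.
From HB Require Import structures.
From mathcomp Require Import all_boot all_order all_algebra.
From mathcomp Require Import all_classical all_reals all_analysis.
From mathcomp Require Import ring lra zify.
Import Order.TTheory GRing.Theory Num.Theory numFieldNormedType.Exports.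
Local Open Scope ring_scope.
Local Open Scope classical_set_scope.

Section Helpers.
Variable R : realType.
Variable p : nat.

Lemma pairD (y z e : 'rV[R]_p) : pair (y + z) e = pair y e + pair z e.
Proof. by rewrite /pair -big_split /=; apply: eq_bigr => k _; rewrite !mxE mulrDl. Qed.

Lemma pairZ (t : R) (y e : 'rV[R]_p) : pair (t *: y) e = t * pair y e.
Proof. by rewrite /pair mulr_sumr; apply: eq_bigr => k _; rewrite !mxE mulrA. Qed.

Lemma pair_rowE (y : 'rV[R]_p) (B : 'M[R]_p) i : pair y (row i B) = (y *m B^T) 0 i.
Proof. by rewrite /pair mxE; apply: eq_bigr => k _; rewrite !mxE. Qed.

Lemma pair_mx (y b : 'rV[R]_p) (B : 'M[R]_p) :
  pair y (b *m B) = \sum_i b 0 i * pair y (row i B).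
Proof.
rewrite /pair; under eq_bigr do rewrite mxE big_distrr.
rewrite exchange_big; apply: eq_bigr => i _; rewrite big_distrr.
by apply: eq_bigr => k _ /=; rewrite !mxE mulrCA.
Qed.

Definition dv (B : 'M[R]_p) (k : 'I_p) : 'rV[R]_p := delta_mx 0 k *m invmx (B^T).

Lemma pair_dv (B : 'M[R]_p) k i : B \in unitmx ->
  pair (dv B k) (row i B) = (i == k)%:R.
Proof.
move=> uB; rewrite pair_rowE /dv mulmxKV ?unitmx_tr // mxE.
by rewrite eqxx.
Qed.

Lemma pair_shift (B : 'M[R]_p) y t k i : B \in unitmx ->
  pair (y + t *: dv B k) (row i B) = pair y (row i B) + t * (i == k)%:R.
Proof. by move=> uB; rewrite pairD pairZ pair_dv. Qed.

Lemma sum_delta (F : 'I_p -> R) k : \sum_i F i * (i == k)%:R = F k.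
Proof.
rewrite (bigD1 k) //= eqxx mulr1 big1 ?addr0 // => i /negbTE ->.
by rewrite mulr0.
Qed.

Lemma cvgE_real (f : nat -> R) r :
  (f n)%:E @[n --> \oo] --> r%:E -> f n @[n --> \oo] --> r.
Proof. by move/fine_cvgP => [_]. Qed.

Lemma is_cvg_bigsum (I : Type) (r : seq I) (P : pred I) (f : I -> nat -> R) :
  (forall i, P i -> cvgn (f i)) -> cvgn (fun n => \sum_(i <- r | P i) f i n).
Proof.
move=> H; elim: r => [|x r IH].
  under eq_fun do rewrite big_nil. exact: is_cvg_cst.
under eq_fun do rewrite big_cons.
case: (boolP (P x)) => Px.
  by apply: is_cvgD => //; exact: H.
by [].
Qed.

End Helpers.
Arguments dv {R p}.

Theorem lemma1 (R : realType) (p j : nat) (h : 'rV[R]_p -> \bar R)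
    (B : 'M[R]_p) (delta : 'I_p -> R) (hs : nat -> 'rV[R]_p -> R) :
  gen_affine h ->
  (exists y0, h y0 \is a fin_num) ->
  B \in unitmx ->
  represents h B delta j ->
  (forall n, affine_fun (hs n)) ->
  (forall y, (fun n => (hs n y)%:E) @ \oo --> h y) ->
  exists (a : nat -> R) (b : 'I_p -> nat -> R),
    [/\ forall n y, hs n y = a n
          + \sum_(i < p | (i < j)%N) b i n * (pair y (row i B) - delta i)
          + \sum_(i < p | (j <= i)%N) b i n * pair y (row i B),
        forall i : 'I_p, (i < j)%N -> b i n @[n --> \oo] --> +oo%R,
        forall i k : 'I_p, k.+1 = i :> nat -> (i < j)%N ->
          b i n / b k n @[n --> \oo] --> 0,
        forall i : 'I_p, (j <= i)%N -> cvgn (b i)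
      & cvgn a].
Proof.
move=> _ [y0 fy0] uB [jp _ Hp Hm Hlast] aff cv.
have [cw Hcw] : exists cw : nat -> R * 'rV[R]_p,
    forall n y, hs n y = (cw n).1 + pair y (cw n).2.
  have [f Hf] := @choice _ _ (fun n (x : R * 'rV[R]_p) => forall y, hs n y = x.1 + pair y x.2)
    (fun n => let: ex_intro c (ex_intro w H) := aff n in ex_intro _ (c, w) H).
  by exists f.
pose b (i : 'I_p) n : R := ((cw n).2 *m invmx B) 0 i.
have key n y : hs n y = (cw n).1 + \sum_i b i n * pair y (row i B).
  by rewrite Hcw -pair_mx mulmxKV.
pose a n := (cw n).1 + \sum_(i < p | (i < j)%N) b i n * delta i.
have decomp : forall n y, hs n y = a n
          + \sum_(i < p | (i < j)%N) b i n * (pair y (row i B) - delta i)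
          + \sum_(i < p | (j <= i)%N) b i n * pair y (row i B).
  move=> n y; rewrite key (bigID (fun i : 'I_p => (i < j)%N)) /=.
  have -> : \sum_(i < p | ~~ (i < j)%N) b i n * pair y (row i B) =
            \sum_(i < p | (j <= i)%N) b i n * pair y (row i B).
    by apply: eq_bigl => i; rewrite -leqNgt.
  under [X in _ = _ + X + _]eq_bigr do rewrite mulrBr.
  rewrite sumrB /a.
  set S1 := \sum_(i < p | (i < j)%N) _. set S2 := \sum_(i < p | (i < j)%N) _.
  set S3 := \sum_(i < p | (j <= i)%N) _. ring.
have shift n y t k : hs n (y + t *: dv B k) = hs n y + t * b k n.
  rewrite !key; under eq_bigr do rewrite pair_shift // mulrDr.
  rewrite big_split /=.
  under [X in _ + (_ + X)]eq_bigr do rewrite mulrCA.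
  by rewrite -mulr_sumr sum_delta addrA.
pose Pr i y := pair y (row i B).
have Hy0 : forall k : 'I_p, (k < j)%N -> pair y0 (row k B) = delta k.
  suff : forall m (k : 'I_p), (k < m)%N -> (k < j)%N -> pair y0 (row k B) = delta k.
    by move=> H k kj; apply: (H k.+1).
  elim=> [//|m IH] k; rewrite ltnS leq_eqVlt => /orP[/eqP km|]; last exact: IH.
  move=> kj.
  have Hk : Hset B delta k y0.
    move=> k' k'k; apply: IH; rewrite -?km //; exact: ltn_trans kj.
  case: (ltgtP (pair y0 (row k B)) (delta k)) => // H.
  - by rewrite (Hm k kj y0 (conj Hk H)) in fy0.
  - by rewrite (Hp k kj y0 (conj Hk H)) in fy0.
pose r0 := fine (h y0).
have H0 : hs n y0 @[n --> \oo] --> r0.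
  by apply: cvgE_real; rewrite /r0 fineK //; exact: cv.
have N0 : \forall n \near \oo, hs n y0 < r0 + 1 /\ r0 - 1 < hs n y0.
  near=> n.
  have /ltr_normlP[h1 h2] : `|r0 - hs n y0| < 1.
    by near: n; exact: ((cvgrPdist_lt _ _).1 H0 1 ltr01).
  split; lra.
have Pr_shift y t k i : pair (y + t *: dv B k) (row i B) = pair y (row i B) + t * (i == k)%:R.
  exact: pair_shift.
have Hcv : forall i : 'I_p, (j <= i)%N -> cvgn (b i).
  move=> i ji.
  pose y1 := y0 + 1 *: dv B i.
  have Hj0 : Hset B delta j y0 by move=> k kj; exact: Hy0.
  have Hj1 : Hset B delta j y1.
    move=> k kj; rewrite Pr_shift (_ : (k == i) = false) ?mulr0 ?addr0.
      exact: Hy0.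
    by apply: ltn_eqF; exact: leq_trans kj ji.
  have [s hs1] : exists s : R, h y1 = s%:E.
    case: Hlast => [[c Hc]|[c [w Hc]]].
      by exists r0; rewrite Hc // -(Hc y0 Hj0) /r0 fineK.
    by exists (c + pair y1 w); rewrite Hc.
  have H1 : hs n y1 @[n --> \oo] --> s by apply: cvgE_real; rewrite -hs1; exact: cv.
  have -> : b i = (fun n => hs n y1 - hs n y0).
    by apply: funext => n; rewrite /y1 shift mul1r; ring.
  apply: is_cvgB; [exact: cvgP H1 | exact: cvgP H0].
exists a, b; split => //.
- move=> i ij; clear Hcv.
  pose y1 := y0 + 1 *: dv B i.
  have Cp : Cplus B delta i y1.
    split; last by rewrite Pr_shift eqxx mulr1 Hy0 // ltrDl.
    move=> k ki; rewrite Pr_shift (_ : (k == i) = false) ?mulr0 ?addr0; last exact: ltn_eqF.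
    apply: Hy0.
    exact: ltn_trans ij.
  have H1 := cv y1; rewrite (Hp i ij y1 Cp) in H1; move/cvgeryP: H1 => H1.
  apply/cvgryPge => A.
  near=> n.
  have h1 : A + r0 + 1 <= hs n y1 by near: n; exact: ((cvgryPge _).1 H1).
  have [h2 h3] : hs n y0 < r0 + 1 /\ r0 - 1 < hs n y0 by near: n; exact: N0.
  have := shift n y0 1 i; rewrite -/y1 mul1r => E.
  lra.
- move=> i k ki ij; clear Hcv.
  have kj : (k < j)%N by lia.
  have ik : (i == k) = false by apply/eqP => E; move: ki; rewrite E; lia.
  have neg : forall e : R, 0 < e -> forall s : R,
      \forall n \near \oo, - e * b k n + s * b i n < 0.
    move=> e e0 s.
    pose y2 := y0 + (- e) *: dv B k + s *: dv B i.
    have Cm : Cminus B delta k y2.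
      split.
        move=> m mk; rewrite /y2 Pr_shift Pr_shift.
        have -> : (m == k) = false by exact: ltn_eqF.
        have -> : (m == i) = false by apply/negbTE/eqP => E; move: mk ki; rewrite E; lia.
        rewrite !mulr0 !addr0; apply: Hy0; exact: ltn_trans kj.
      by rewrite /y2 Pr_shift Pr_shift eq_sym ik eqxx mulr0 addr0 mulr1 Hy0 // gtrDl oppr_lt0.
    have H2 := cv y2; rewrite (Hm k kj y2 Cm) in H2; move/cvgerNyP: H2 => H2.
    near=> n.
    have h1 : hs n y2 <= r0 - 1 by near: n; exact: ((cvgrNyPle _).1 H2).
    have [h2 h3] : hs n y0 < r0 + 1 /\ r0 - 1 < hs n y0 by near: n; exact: N0.
    have E : hs n y2 = hs n y0 + - e * b k n + s * b i n by rewrite /y2 shift shift.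
    lra.
  apply/cvgr0Pnorm_lt => e e0.
  near=> n.
  have h1 : - e * b k n + 1 * b i n < 0 by near: n; exact: neg.
  have h2 : - e * b k n + (-1) * b i n < 0 by near: n; exact: neg.
  have bk0 : 0 < b k n.
    have : 0 < e * b k n by lra.
    by rewrite pmulr_rgt0.
  rewrite normrM normfV (gtr0_norm bk0) ltr_pdivrMr //.
  rewrite ltr_norml; apply/andP; split; lra.
- have -> : a = (fun n => hs n y0 - \sum_(i < p | (j <= i)%N) b i n * pair y0 (row i B)).
    apply: funext => n; rewrite (decomp n y0) big1 ?addr0; first by ring.
    by move=> i ij; rewrite Hy0 // subrr mulr0.
  apply: is_cvgB; first exact: cvgP H0.
  apply: is_cvg_bigsum => i ji.
  apply: is_cvgM; [exact: Hcv | exact: is_cvg_cst].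
Unshelve. all: by end_near.
Qed.
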